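(* Let $\mathfrak{g}$ be a semi-simple real Lie algebra with a faithful finite dimensional real representation $\mathfrak{g}\to\mathrm{End}(W)$, and suppose there is a symmetric bilinear $\mathfrak{g}$-equivariant map $\wedge:W\times W\to W^*$ which does not vanish identically on any $2$-dimensional linear subspace of $W$. Let $\mu:\mathfrak{sl}_2(\mathbf{R})\to\mathfrak{g}$ be an injective Lie algebra morphism. Then every highest weight of the representation $\mathfrak{sl}_2(\mathbf{R})\to\mathfrak{g}\to\mathrm{End}(W)$ is at most $4$, and at most one irreducible summand has highest weight $4$.
   Context: Weights of $\mathfrak{sl}_2(\mathbf{R})$-representations are taken with respect to the Cartan subalgebra of diagonal matrices, normalized so that the irreducible representation of dimension $n+1$ (on homogeneous polynomials of degree $n$ in two variables) has weights $-n,-n+2,\dots,n-2,n$ and highest weight $n$; i.e. weights are the eigenvalues of $\mathrm{diag}(1,-1)$. $W^*$ is the dual representation and equivariance of $\wedge$ means $X\cdot(a\wedge b)=(X\cdot a)\wedge b+a\wedge(X\cdot b)$. *)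

(* Defs.v *)
(* Real scalars are modelled by an arbitrary real closed
   field R : rcfType. *)
From HB Require Import structures.
From mathcomp Require Import all_boot all_order all_algebra.
Set Implicit Arguments. Unset Strict Implicit. Unset Printing Implicit Defensive.
Import Order.TTheory GRing.Theory Num.Theory.
Local Open Scope ring_scope.

Section LieDefs.
Variable R : rcfType.

Definition lie_br (m : nat) (A B : 'M[R]_m) : 'M[R]_m := A *m B - B *m A.

Variable n : nat.
(* W = 'cV[R]_n (column vectors); End(W) = 'M[R]_n acting by A *m w.
   Linear subspaces of End(W) are encoded as row spaces G : 'M_(n*n)
   of mxvec-encoded matrices:  A \in G  means  (mxvec A <= G)%MS. *)

Definition lie_subalgebra (G : 'M[R]_(n * n)) : Prop :=
  forall A B : 'M[R]_n, (A \in G)%MS -> (B \in G)%MS -> (lie_br A B \in G)%MS.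

Definition is_ideal (G I : 'M[R]_(n * n)) : Prop :=
  (I <= G)%MS /\
  forall A B : 'M[R]_n, (A \in G)%MS -> (B \in I)%MS -> (lie_br A B \in I)%MS.

Definition derived (I : 'M[R]_(n * n)) : 'M[R]_(n * n) :=
  (\sum_(i < n * n) \sum_(j < n * n)
     <<mxvec (lie_br (vec_mx (row i I)) (vec_mx (row j I)))>>)%MS.

Definition solvable_sub (I : 'M[R]_(n * n)) : Prop :=
  exists k : nat, iter k derived I = 0.

Definition semisimple (G : 'M[R]_(n * n)) : Prop :=
  forall I : 'M[R]_(n * n), is_ideal G I -> solvable_sub I -> I = 0.

Definition sl2h : 'M[R]_2 :=
  \matrix_(i < 2, j < 2) (if i == j then (if i == ord0 then 1 else -1) else 0).

(* mu : sl_2 -> g injective Lie algebra morphism (only its values on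
   traceless matrices matter) *)
Definition sl2_morphism (G : 'M[R]_(n * n)) (mu : 'M[R]_2 -> 'M[R]_n) : Prop :=
  [/\ forall X, \tr X = 0 -> (mu X \in G)%MS,
      forall (a : R) X Y, \tr X = 0 -> \tr Y = 0 ->
        mu (a *: X + Y) = a *: mu X + mu Y,
      forall X Y, \tr X = 0 -> \tr Y = 0 ->
        mu (lie_br X Y) = lie_br (mu X) (mu Y)
    & forall X Y, \tr X = 0 -> \tr Y = 0 -> mu X = mu Y -> X = Y].

(* wedge : W x W -> W^*, with W^* = 'rV_n, pairing phi(w) = phi *m w. *)
Definition wedge_bilinear (wedge : 'cV[R]_n -> 'cV[R]_n -> 'rV[R]_n) : Prop :=
  (forall (s : R) a a' b, wedge (s *: a + a') b = s *: wedge a b + wedge a' b) /\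
  (forall (s : R) a b b', wedge a (s *: b + b') = s *: wedge a b + wedge a b').

Definition wedge_symmetric (wedge : 'cV[R]_n -> 'cV[R]_n -> 'rV[R]_n) : Prop :=
  forall a b, wedge a b = wedge b a.

(* equivariance: X.(a ^ b) = (X.a) ^ b + a ^ (X.b), where X acts on
   W^* by the dual action  X.phi = - phi *m A_X. *)
Definition wedge_equivariant (G : 'M[R]_(n * n))
  (wedge : 'cV[R]_n -> 'cV[R]_n -> 'rV[R]_n) : Prop :=
  forall A : 'M[R]_n, (A \in G)%MS ->
    forall a b, - (wedge a b *m A) = wedge (A *m a) b + wedge a (A *m b).

Definition wedge_nonvanishing2 (wedge : 'cV[R]_n -> 'cV[R]_n -> 'rV[R]_n) : Prop :=
  forall a b : 'cV[R]_n, \rank (row_mx a b) = 2%N ->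
    exists s t s' t' : R, wedge (s *: a + t *: b) (s' *: a + t' *: b) != 0.

(* Subspaces of W are row spaces U : 'M_n; the column vector w lies in U
   iff (w^T <= U)%MS. *)
Definition sl2_invariant (mu : 'M[R]_2 -> 'M[R]_n) (U : 'M[R]_n) : Prop :=
  forall X : 'M[R]_2, \tr X = 0 -> (U *m (mu X)^T <= U)%MS.

Definition sl2_irreducible (mu : 'M[R]_2 -> 'M[R]_n) (U : 'M[R]_n) : Prop :=
  [/\ U != 0, sl2_invariant mu U &
      forall V : 'M[R]_n, sl2_invariant mu V -> (V <= U)%MS ->
        V = 0 \/ (V == U)%MS].

Definition weight_vector (mu : 'M[R]_2 -> 'M[R]_n) (U : 'M[R]_n)
  (lam : R) (v : 'cV[R]_n) : Prop :=
  [/\ v != 0, (v^T <= U)%MS & mu sl2h *m v = lam *: v].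

Definition highest_weight (mu : 'M[R]_2 -> 'M[R]_n) (U : 'M[R]_n) (lam : R) : Prop :=
  (exists v, weight_vector mu U lam v) /\
  (forall lam' v, weight_vector mu U lam' v -> lam' <= lam).

Definition sl2_decomposition (mu : 'M[R]_2 -> 'M[R]_n) (k : nat)
  (U : 'I_k -> 'M[R]_n) : Prop :=
  [/\ forall i, sl2_irreducible mu (U i),
      mxdirect (\sum_(i < k) U i) &
      (\sum_(i < k) U i == 1%:M)%MS].

End LieDefs.

(* Main.v *)
Require Import Defs.
From HB Require Import structures.
From mathcomp Require Import all_boot all_order all_algebra.
Import Order.TTheory GRing.Theory Num.Theory.
Local Open Scope ring_scope.
Set Implicit Arguments. Unset Strict Implicit.

Ltac mxsimp := apply/matrixP; case=> [[|[|?]] ?]; case=> [[|[|?]] ?] => //;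
  rewrite !mxE ?big_ord_recr ?big_ord0 /= ?mxE /= -?val_eqE /=;
  rewrite ?(mul0r, mulr0, mul1r, mulr1, addr0, add0r, subr0, sub0r, mulrN1,
            mulN1r, opprK, oppr0) //.

Section Aux.
Variable R : rcfType.

Definition e2 : 'M[R]_2 :=
  \matrix_(i < 2, j < 2) (if ((i : nat) == 0%N) && ((j : nat) == 1%N) then 1 else 0).
Definition f2 : 'M[R]_2 :=
  \matrix_(i < 2, j < 2) (if ((i : nat) == 1%N) && ((j : nat) == 0%N) then 1 else 0).

Lemma tr_e2 : \tr e2 = 0.
Proof. by rewrite /mxtrace !big_ord_recr big_ord0 /= !mxE add0r addr0. Qed.
Lemma tr_f2 : \tr f2 = 0.
Proof. by rewrite /mxtrace !big_ord_recr big_ord0 /= !mxE add0r addr0. Qed.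
Lemma tr_h : \tr (sl2h R) = 0.
Proof. by rewrite /mxtrace !big_ord_recr big_ord0 /= !mxE !eqxx -?val_eqE /= add0r addrN. Qed.

Lemma br_he : lie_br (sl2h R) e2 = 2 *: e2.
Proof. mxsimp. Qed.
Lemma br_hf : lie_br (sl2h R) f2 = (-2) *: f2.
Proof. mxsimp; by rewrite -opprD. Qed.
Lemma br_ef : lie_br e2 f2 = sl2h R.
Proof. mxsimp. Qed.
End Aux.

Section Main.
Variables (R : rcfType) (n : nat) (G : 'M[R]_(n * n))
  (wedge : 'cV[R]_n -> 'cV[R]_n -> 'rV[R]_n) (mu : 'M[R]_2 -> 'M[R]_n).
Hypotheses (Hbil : wedge_bilinear wedge) (Heq : wedge_equivariant G wedge)
  (Hnv : wedge_nonvanishing2 wedge) (Hmu : sl2_morphism G mu).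

Let H := mu (sl2h R).
Let E := mu (e2 R).
Let F := mu (f2 R).

Lemma mu0 : mu 0 = 0.
Proof.
case: Hmu => _ lin _ _.
have := lin 1 0 0; rewrite mxtrace0 => /(_ erefl erefl).
rewrite !scale1r !addr0 => /esym/eqP; rewrite -subr_eq0 addrK => /eqP; apply.
Qed.

Lemma muZ a X : \tr X = 0 -> mu (a *: X) = a *: mu X.
Proof.
case: Hmu => _ lin _ _ tX.
by have := lin a X 0 tX (mxtrace0 _ _); rewrite !addr0 mu0 addr0.
Qed.

Lemma HE : H *m E = E *m H + 2 *: E.
Proof.
case: Hmu => _ _ br _.
have := br _ _ (tr_h R) (tr_e2 R); rewrite br_he muZ ?tr_e2 // /lie_br => ->.
by rewrite addrC subrK.
Qed.

Lemma HF : H *m F = F *m H + (-2) *: F.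
Proof.
case: Hmu => _ _ br _.
have := br _ _ (tr_h R) (tr_f2 R); rewrite br_hf muZ ?tr_f2 // /lie_br => ->.
by rewrite addrC subrK.
Qed.

Lemma EF : E *m F - F *m E = H.
Proof.
case: Hmu => _ _ br _.
by have := br _ _ (tr_e2 R) (tr_f2 R); rewrite br_ef /lie_br => <-.
Qed.

Lemma HG : (H \in G)%MS.
Proof. by case: Hmu => inG _ _ _; apply: inG; apply: tr_h. Qed.

Definition wt (c : R) := exists2 v : 'cV[R]_n, v != 0 & H *m v = c *: v.

Lemma wedge0l b : wedge 0 b = 0.
Proof.
case: Hbil => L _; have := L 1 0 0 b; rewrite !scale1r !addr0 => /esym/eqP.
by rewrite -subr_eq0 addrK => /eqP; apply.
Qed.

Lemma wedge0r a : wedge a 0 = 0.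
Proof.
case: Hbil => _ L; have := L 1 a 0 0; rewrite !scale1r !addr0 => /esym/eqP.
by rewrite -subr_eq0 addrK => /eqP; apply.
Qed.

Lemma wedgeL s t a b y : wedge (s *: a + t *: b) y = s *: wedge a y + t *: wedge b y.
Proof.
case: Hbil => L _; rewrite L; congr (_ + _).
by have := L t b 0 y; rewrite addr0 wedge0l addr0.
Qed.

Lemma wedgeR s t a b y : wedge y (s *: a + t *: b) = s *: wedge y a + t *: wedge y b.
Proof.
case: Hbil => _ L; rewrite L; congr (_ + _).
by have := L t y b 0; rewrite addr0 wedge0r addr0.
Qed.

Lemma wedge_weight a b al be : H *m a = al *: a -> H *m b = be *: b ->
  wedge a b *m H = (- (al + be)) *: wedge a b.
Proof.
move=> Ha Hb; have := @Heq H HG a b; rewrite Ha Hb.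
have -> : wedge (al *: a) b = al *: wedge a b.
  by have := wedgeL al 0 a 0 b; rewrite !scale0r !addr0.
have -> : wedge a (be *: b) = be *: wedge a b.
  by have := wedgeR be 0 b 0 a; rewrite !scale0r !addr0.
by rewrite -scalerDl scaleNr => <-; rewrite opprK.
Qed.

Lemma wt_of_row (phi : 'rV[R]_n) c : phi != 0 -> phi *m H = c *: phi -> wt c.
Proof.
move=> phi0 Hphi.
have : \det (H - c%:M) == 0.
  apply/det0P; exists phi => //.
  by rewrite mulmxBr mul_mx_scalar Hphi subrr.
rewrite -det_tr => /det0P [r r0 Hr].
exists r^T; first by apply: contra r0 => /eqP; rewrite -trmx0 => /trmx_inj ->.
apply/eqP; rewrite -subr_eq0 -mul_scalar_mx -mulmxBl.
by rewrite -[H - _]trmxK -trmx_mul Hr trmx0.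
Qed.

Lemma wt_root c : wt c -> root (char_poly H^T) c.
Proof.
case=> v v0 Hv; rewrite -eigenvalue_root_char; apply/eigenvalueP.
exists v^T; first by rewrite -trmx_mul Hv linearZ.
by apply: contra v0 => /eqP; rewrite -trmx0 => /trmx_inj ->.
Qed.

Lemma rank2 (a b : 'cV[R]_n) : a != 0 -> b != 0 -> (a^T :&: b^T)%MS = 0 ->
  \rank (row_mx a b) = 2%N.
Proof.
move=> a0 b0 ab0.
have ta : a^T != 0 by apply: contra a0 => /eqP; rewrite -trmx0 => /trmx_inj ->.
have tb : b^T != 0 by apply: contra b0 => /eqP; rewrite -trmx0 => /trmx_inj ->.
by rewrite -mxrank_tr tr_row_mx -(addsmxE a^T b^T) mxrank_disjoint_sum // !rank_rV ta tb.
Qed.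

Lemma cap_eig (a b : 'cV[R]_n) al be : H *m a = al *: a -> H *m b = be *: b ->
  al != be -> (a^T :&: b^T)%MS = 0.
Proof.
move=> Ha Hb ne; apply/eqP/rowV0P => x.
rewrite sub_capmx => /andP[/sub_rVP[k1 ->] /sub_rVP[k2 e]].
have tA : a^T *m H^T = al *: a^T by rewrite -trmx_mul Ha linearZ.
have tB : b^T *m H^T = be *: b^T by rewrite -trmx_mul Hb linearZ.
have := congr1 (fun z => z *m H^T) e; rewrite /= -!scalemxAl tA tB !scalerA.
rewrite mulrC [k2 * _]mulrC -!scalerA -e => /eqP.
rewrite -subr_eq0 -scalerBl scaler_eq0 subr_eq0 (negbTE ne) /= => /eqP; apply.
Qed.

Lemma big_norm (c k g : R) : g = c + c + k -> `|k| <= 4 -> 4 < `|c| -> `|c| < `|- g|.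
Proof.
move=> -> k4 c4; rewrite normrN.
apply: lt_le_trans (lerB_normD (c + c) k).
rewrite -mulr2n normrMn mulr2n -addrA ltrDl subr_gt0.
exact: le_lt_trans k4 c4.
Qed.

Lemma companion (v : 'cV[R]_n) c : v != 0 -> H *m v = c *: v -> c != 0 ->
  exists (u : 'cV[R]_n) (d : R), [/\ u != 0, H *m u = (c + d) *: u & d = 2 \/ d = -2].
Proof.
move=> v0 Hv c0.
case: (eqVneq (E *m v) 0) => Ev; last first.
  exists (E *m v), (2 : R); split => //; last by left.
  by rewrite mulmxA HE mulmxDl -mulmxA Hv -scalemxAr -scalemxAl scalerDl.
case: (eqVneq (F *m v) 0) => Fv; last first.
  exists (F *m v), (-2 : R); split => //; last by right.
  by rewrite mulmxA HF mulmxDl -mulmxA Hv -scalemxAr -scalemxAl scalerDl.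
have : H *m v = 0 by rewrite -EF mulmxBl -!mulmxA Ev Fv !mulmx0 subrr.
rewrite Hv => /eqP; rewrite scaler_eq0 (negbTE c0) (negbTE v0).
by [].
Qed.

Lemma plane (a b : 'cV[R]_n) al be : a != 0 -> b != 0 -> H *m a = al *: a ->
  H *m b = be *: b -> (a^T :&: b^T)%MS = 0 ->
  exists2 g, wt (- g) & [\/ g = al + al, g = al + be, g = be + al | g = be + be].
Proof.
move=> a0 b0 Ha Hb ab; have [s [t [s' [t' nz]]]] := Hnv (rank2 a0 b0 ab).
have key x y ax ay : H *m x = ax *: x -> H *m y = ay *: y -> wedge x y != 0 ->
    wt (- (ax + ay)).
  by move=> Hx Hy nz'; apply: (wt_of_row nz'); apply: wedge_weight.
case: (eqVneq (wedge a a) 0) => [aa|aa]; last by exists (al + al); [exact: (key _ _ _ _ Ha Ha aa) | exact: Or41].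
case: (eqVneq (wedge a b) 0) => [abw|abw]; last by exists (al + be); [exact: (key _ _ _ _ Ha Hb abw) | exact: Or42].
case: (eqVneq (wedge b a) 0) => [ba|ba]; last by exists (be + al); [exact: (key _ _ _ _ Hb Ha ba) | exact: Or43].
case: (eqVneq (wedge b b) 0) => [bb|bb]; last by exists (be + be); [exact: (key _ _ _ _ Hb Hb bb) | exact: Or44].
by move: nz; rewrite wedgeL !wedgeR aa abw ba bb !(scaler0, addr0) eqxx.
Qed.

Lemma step c : wt c -> 4 < `|c| -> exists2 c', wt c' & `|c| < `|c'|.
Proof.
case=> v v0 Hv c4.
have c0 : c != 0 by apply: contraTneq c4 => ->; rewrite normr0 ltNge ler0n.
have [u [d [u0 Hu hd]]] := companion v0 Hv c0.
have dnz : d != 0 by case: hd => ->; rewrite ?oppr_eq0 pnatr_eq0.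
have ne : c != c + d by rewrite -subr_eq0 opprD addrA subrr add0r oppr_eq0 dnz.
have [g wg hg] := plane v0 u0 Hv Hu (cap_eig Hv Hu ne).
have d4 : `|d| <= 4 by case: hd => ->; rewrite ?normrN normr_nat ler_nat.
exists (- g) => //; case: hg => hg.
- apply: (big_norm (k := 0)) => //; first by rewrite hg addr0.
  by rewrite normr0 ler0n.
- by apply: (big_norm (k := d)) => //; rewrite hg addrA.
- by apply: (big_norm (k := d)) => //; rewrite hg addrAC.
- apply: (big_norm (k := d + d)) => //; first by rewrite hg addrACA.
  by case: hd => ->; rewrite -?opprD ?normrN -natrD normr_nat ler_nat.
Qed.

Lemma no_big c : wt c -> `|c| <= 4.
Proof.
move=> wc; rewrite leNgt; apply/negP => c4.
suff: forall m, exists rs : seq R, [/\ size rs = m, uniq rs,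
    all (root (char_poly H^T)) rs &
    exists2 c0, wt c0 /\ 4 < `|c0| & all (fun x => `|x| < `|c0|) rs].
  move=> /(_ n.+1) [rs [srs urs rrs _]].
  have p0 : char_poly H^T != 0 by rewrite -size_poly_eq0 size_char_poly.
  by have := max_poly_roots p0 rrs urs; rewrite srs size_char_poly ltnn.
elim=> [|m [rs [srs urs rrs [c0 [w0 c04] lt0]]]].
  by exists [::]; split => //; exists c.
have [c1 w1 lt1] := step w0 c04.
exists (c0 :: rs); split => /=.
- by rewrite srs.
- by rewrite urs andbT; apply/negP => /(allP lt0); rewrite ltxx.
- by rewrite (wt_root w0) rrs.
- exists c1; first by split => //; exact: lt_trans c04 lt1.
  rewrite lt1 /=; apply/allP => x /(allP lt0) h; exact: lt_trans h lt1.
Qed.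

End Main.

Theorem lemma5p3 (R : rcfType) (n : nat) (G : 'M[R]_(n * n))
  (wedge : 'cV[R]_n -> 'cV[R]_n -> 'rV[R]_n) (mu : 'M[R]_2 -> 'M[R]_n) :
  lie_subalgebra G -> semisimple G ->
  wedge_bilinear wedge -> wedge_symmetric wedge ->
  wedge_equivariant G wedge -> wedge_nonvanishing2 wedge ->
  sl2_morphism G mu ->
  forall (k : nat) (U : 'I_k -> 'M[R]_n), sl2_decomposition mu U ->
    (forall i lam, highest_weight mu (U i) lam -> lam <= 4) /\
    (forall i j, highest_weight mu (U i) 4 -> highest_weight mu (U j) 4 -> i = j).
Proof.
move=> _ _ Hbil _ Heq Hnv Hmu k U [_ Udir _]; split.
  move=> i lam [[v [v0 _ Hv]] _].
  have := no_big Hbil Heq Hnv Hmu (c := lam); rewrite /wt => /(_ (ex_intro2 _ _ v v0 Hv)).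
  exact: le_trans (ler_norm lam).
move=> i j [[vi [vi0 viU Hvi]] _] [[vj [vj0 vjU Hvj]] _].
apply/eqP; apply/negPn/negP => ij.
have cap : (vi^T :&: vj^T)%MS = 0.
  apply/eqP/rowV0P => x; rewrite sub_capmx => /andP[xi xj].
  have : (x <= U i :&: \sum_(l | true && (l != i)) U l)%MS.
    rewrite sub_capmx (submx_trans xi viU) /=.
    apply: submx_trans xj _; apply: submx_trans vjU _.
    by apply: (sumsmx_sup j) => //; rewrite eq_sym.
  by move/mxdirect_sumsP: Udir => /(_ i isT) ->; rewrite submx0 => /eqP.
have [g wg hg] := plane Hbil Heq Hnv Hmu vi0 vj0 Hvi Hvj cap.
have := no_big Hbil Heq Hnv Hmu wg.
have -> : g = 8%:R by case: hg => ->; rewrite -natrD.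
by rewrite normrN normr_nat ler_nat.
Qed.
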